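(* Let $X$ be a finite set with $|X|\ge 3$ and $(X,r)$ a Lyubashenko solution, $r(x,y)=(\lambda(y),\rho(x))$ with $\lambda,\rho\in\mathrm{Sym}(X)$ commuting. Then $(X,r)$ is simple if and only if $|X|=p$ for some prime $p$ and the group $\langle\lambda,\rho\rangle$ is cyclic of order $p$. Equivalently, the simple Lyubashenko solutions with $|X|\ge3$ are, up to isomorphism, the solutions $\mathbb{Z}_p^2\to\mathbb{Z}_p^2$, $(x,y)\mapsto(y+a,x+b)$, with $p\ge3$ prime and $a,b\in\mathbb{Z}_p$, $(a,b)\neq(0,0)$.
   Context: A set-theoretic solution $(X,r)$: $X$ non-empty, $r$ satisfies $(r\times\mathrm{id})(\mathrm{id}\times r)(r\times\mathrm{id})=(\mathrm{id}\times r)(r\times\mathrm{id})(\mathrm{id}\times r)$. For commuting permutations $\lambda,\rho$ of $X$, $r(x,y)=(\lambda(y),\rho(x))$ is a non-degenerate solution (a Lyubashenko solution). A morphism $f\colon(X,r)\to(Y,s)$ is a map with $(f\times f)r=s(f\times f)$; $(X,r)$ with $|X|>1$ is simple if every surjective morphism $(X,r)\to(Y,s)$ is bijective or has $|Y|=1$. *)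

(* Defs.v *)
From mathcomp Require Import all_boot all_fingroup all_solvable.
Set Implicit Arguments. Unset Strict Implicit. Unset Printing Implicit Defensive.

Definition r12 {X : Type} (r : X * X -> X * X) (t : X * X * X) : X * X * X :=
  let '(x, y, z) := t in let '(a, b) := r (x, y) in (a, b, z).
Definition r23 {X : Type} (r : X * X -> X * X) (t : X * X * X) : X * X * X :=
  let '(x, y, z) := t in let '(b, c) := r (y, z) in (x, b, c).

Definition is_solution {X : Type} (r : X * X -> X * X) : Prop :=
  forall t, r12 r (r23 r (r12 r t)) = r23 r (r12 r (r23 r t)).

Definition lyu {X : finType} (lam rho : {perm X}) (xy : X * X) : X * X :=
  (lam xy.2, rho xy.1).

Definition is_morphism {X Y : Type} (r : X * X -> X * X) (s : Y * Y -> Y * Y)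
  (f : X -> Y) : Prop :=
  forall x y, (f (r (x, y)).1, f (r (x, y)).2) = s (f x, f y).

Definition simple_solution {X : Type} (r : X * X -> X * X) : Prop :=
  (exists x y : X, x <> y) /\
  forall (Y : Type) (s : Y * Y -> Y * Y) (f : X -> Y),
    is_solution s -> is_morphism r s f -> (forall y, exists x, f x = y) ->
    bijective f \/ (forall y1 y2 : Y, y1 = y2).

(* Main.v *)
Require Import Defs.
From mathcomp Require Import all_boot all_fingroup all_solvable.
From Stdlib Require Import ClassicalEpsilon.
Set Implicit Arguments. Unset Strict Implicit. Unset Printing Implicit Defensive.

Lemma lyu_sol (X : finType) (lam rho : {perm X}) :
  commute lam rho -> is_solution (lyu lam rho).
Proof.
move=> c [[x y] z]; rewrite /Defs.r12 /Defs.r23 /lyu /=.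
by rewrite -[rho (lam y)]permM c permM.
Qed.

Lemma surj_sol (X Y : Type) (r : X * X -> X * X) (s : Y * Y -> Y * Y) (f : X -> Y) :
  is_solution r -> is_morphism r s f -> (forall y, exists x, f x = y) ->
  is_solution s.
Proof.
move=> hr hm hs.
pose F3 (t : X * X * X) := let '(x, y, z) := t in (f x, f y, f z).
have h12 t : Defs.r12 s (F3 t) = F3 (Defs.r12 r t).
  case: t => [[x y] z]; rewrite /Defs.r12 /= -hm; by case: (r (x, y)).
have h23 t : Defs.r23 s (F3 t) = F3 (Defs.r23 r t).
  case: t => [[x y] z]; rewrite /Defs.r23 /= -hm; by case: (r (y, z)).
move=> [[A B] C].
case: (hs A) => a <-; case: (hs B) => b <-; case: (hs C) => c <-.
have -> : (f a, f b, f c) = F3 (a, b, c) by [].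
by rewrite !h12 !h23 !h12 hr.
Qed.

Section Key.
Variables (X : finType) (T : eqType) (lam rho : {perm X}).
Hypothesis hc : commute lam rho.
Variable g : X -> T.
Hypothesis Hl : forall x y, g x = g y -> g (lam x) = g (lam y).
Hypothesis Hr : forall x y, g x = g y -> g (rho x) = g (rho y).

Definition KY := {t : T | t \in codom g}.
Definition KG (x : X) : KY := exist _ (g x) (codom_f g x).
Definition Kpk (B : KY) : X := iinv (valP B).
Lemma KpkE B : g (Kpk B) = val B.
Proof. exact: f_iinv. Qed.
Definition Ks (AB : KY * KY) : KY * KY :=
  (KG (lam (Kpk AB.2)), KG (rho (Kpk AB.1))).

Lemma key : simple_solution (lyu lam rho) ->
  (forall x y, g x = g y) \/ (forall x y, g x = g y -> x = y).
Proof.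
case=> _ /(_ KY Ks KG) H.
have mor : is_morphism (lyu lam rho) Ks KG.
  move=> x y; rewrite /Ks /lyu /=; congr (_, _); apply: val_inj => /=.
    by apply: Hl; rewrite KpkE.
  by apply: Hr; rewrite KpkE.
have sur : forall B, exists x, KG x = B.
  by move=> B; exists (Kpk B); apply: val_inj; rewrite /= KpkE.
have sol := surj_sol (lyu_sol hc) mor sur.
case: (H sol mor sur) => [bij|eq]; [right|left].
  move=> x y e; apply: (bij_inj bij); exact: val_inj.
by move=> x y; have := eq (KG x) (KG y) => /(congr1 val).
Qed.
End Key.

Lemma gen2_ab (X : finType) (lam rho : {perm X}) : commute lam rho ->
  forall h k, h \in <<[set lam; rho]>>%g -> k \in <<[set lam; rho]>>%g -> commute h k.
Proof.
move=> c.
have ab : abelian <<[set lam; rho]>>%g.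
  rewrite abelian_gen abelianE; apply/centsP => a /set2P[]-> b /set2P[]->;
  by [apply: commute_refl | apply: c | apply: commute_sym].
by move=> h k hG kG; exact: (centsP ab h hG k kG).
Qed.

Lemma cyc_gen (gT : finGroupType) (G : {group gT}) (c : gT) :
  prime #|G| -> c \in G -> c != 1%g -> forall h, h \in G -> exists i, h = (c ^+ i)%g.
Proof.
move=> pG cG c1 h hG; apply/cycleP.
have sub : <[c]>%g \subset G by rewrite cycle_subG.
have e : <[c]>%g = G.
  apply/eqP; rewrite eqEcard sub /=.
  have d := cardSg sub.
  have n1 : #|<[c]>%g| != 1 by rewrite -trivg_card1 cycle_eq1.
  by move/(prime_nt_dvdP pG n1): d => ->.
by rewrite e.
Qed.

Lemma conv (X : finType) (lam rho : {perm X}) (p : nat) :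
  commute lam rho -> prime p -> #|X| = p -> #|<<[set lam; rho]>>%g| = p ->
  simple_solution (lyu lam rho).
Proof.
set G := <<[set lam; rho]>>%G => hc pp hX hG.
have pG : prime #|G| by rewrite hG.
have lamG : lam \in G by rewrite mem_gen // set21.
have rhoG : rho \in G by rewrite mem_gen // set22.
split.
  have : 1 < #|X| by rewrite hX prime_gt1.
  by case/card_gt1P => x [y [_ _ /eqP nxy]]; exists x, y.
move=> Y s f sol mor sur.
pose inv (h : {perm X}) := forall x x', f x = f x' -> f (h x) = f (h x').
have invl : inv lam.
  move=> x x' e; have h1 := congr1 fst (mor x x); have h2 := congr1 fst (mor x x').
  simpl in h1, h2; by rewrite h1 h2 e.
have invr : inv rho.
  move=> x x' e; have h1 := congr1 snd (mor x x); have h2 := congr1 snd (mor x' x).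
  simpl in h1, h2; by rewrite h1 h2 e.
have invX h i : inv h -> inv (h ^+ i)%g.
  move=> ih x x' e; rewrite !permX; elim: i => //= i IH; exact: ih.
have [c cG [c1 invc]] : exists2 c, c \in G & (c != 1%g) /\ inv c.
  case: (eqVneq lam 1%g) => [l1|l1]; last by exists lam.
  case: (eqVneq rho 1%g) => [r1|r1]; last by exists rho.
  have : G \subset [1 {perm X}]%g.
    by rewrite gen_subG l1 r1 setUid sub1set inE.
  move/trivgP => G1; move: pG; by rewrite /= G1 cards1.
have invG h : h \in G -> inv h.
  by move=> hG'; case: (cyc_gen pG cG c1 hG') => i ->; apply: invX.
have [x0 cx0] : exists x0, c x0 != x0.
  apply/existsP; apply: contraR c1 => /existsPn H; apply/eqP/permP => x.
  by rewrite perm1; apply/eqP; move: (H x); rewrite negbK.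
have orbT : orbit 'P G x0 = [set: X].
  apply/eqP; rewrite eqEcard subsetT cardsT hX /=.
  have d : #|orbit 'P G x0| %| p by rewrite -hG card_orbit dvdn_indexg.
  have n1 : #|orbit 'P G x0| != 1.
    apply: contra cx0 => /cards1P[z ez].
    have h1 : x0 \in orbit 'P G x0 := orbit_refl _ _ _.
    have h2 : c x0 \in orbit 'P G x0 by apply/orbitP; exists c => //; rewrite apermE.
    by move: h1 h2; rewrite ez !inE => /eqP -> /eqP ->.
  by move/(prime_nt_dvdP pp n1): d => ->.
have trans a b : b \in orbit 'P G a.
  have : a \in orbit 'P G x0 by rewrite orbT inE.
  rewrite -orbit_eq_mem => /eqP ->; by rewrite orbT inE.
case: (classic (exists a b, a <> b /\ f a = f b)) => [[a [b [nab fab]]]|nex].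
  right.
  have [h hG' hab] : exists2 h, h \in G & h a = b.
    by case/orbitP: (trans a b) => h hG' e; exists h; rewrite /= ?apermE in e.
  have h1 : h != 1%g by apply: contra_notN nab => /eqP h1; rewrite -hab h1 perm1.
  have fa : forall y, f y = f a.
    move=> y; case/orbitP: (trans a y) => k kG <-; rewrite /= ?apermE.
    case: (cyc_gen pG hG' h1 kG) => i ->; rewrite permX.
    elim: i => //= i IH; rewrite fab -hab.
    exact: (invG h hG' _ _ IH).
  move=> y1 y2; case: (sur y1) => x1 <-; case: (sur y2) => x2 <-.
  by rewrite !fa.
left.
have inj : forall a b, f a = f b -> a = b.
  move=> a b e; apply: NNPP => nab; apply: nex; by exists a, b.
pose g y := proj1_sig (constructive_indefinite_description _ (sur y)).
have gK y : f (g y) = y by rewrite /g; case: constructive_indefinite_description.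
exists g => [x|y]; last exact: gK.
by apply: inj; rewrite gK.
Qed.

Lemma orbH_inv (X : finType) (G H : {group {perm X}}) (a : {perm X}) :
  (forall h k, h \in G -> k \in G -> commute h k) ->
  H \subset G -> a \in G -> forall x y,
  orbit 'P H x = orbit 'P H y -> orbit 'P H (a x) = orbit 'P H (a y).
Proof.
move=> ab sHG aG x y e.
have : y \in orbit 'P H x by rewrite e orbit_refl.
case/orbitP => k kH; rewrite /= apermE => <-.
apply/esym/eqP; rewrite orbit_eq_mem; apply/orbitP; exists k => //.
have kG : k \in G by apply: (subsetP sHG).
by rewrite /= apermE -!permM (ab _ _ aG kG).
Qed.

Lemma fwd (X : finType) (lam rho : {perm X}) :
  2 < #|X| -> commute lam rho -> simple_solution (lyu lam rho) ->
  exists p : nat, [/\ prime p, #|X| = p,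
    cyclic <<[set lam; rho]>>%g & #|<<[set lam; rho]>>%g| = p].
Proof.
set G := <<[set lam; rho]>>%G => hX hc hs.
have lamG : lam \in G by rewrite mem_gen // set21.
have rhoG : rho \in G by rewrite mem_gen // set22.
have ab := gen2_ab hc.
have [x0 _] : exists x0 : X, x0 \in X by apply/card_gt0P; apply: leq_trans hX.
have orbG a x : a \in G -> orbit 'P G (a x) = orbit 'P G x.
  by move=> aG; apply/eqP; rewrite orbit_eq_mem; apply/orbitP; exists a; rewrite /= ?apermE.
have k1 := key hc (orbH_inv ab (subxx G) lamG) (orbH_inv ab (subxx G) rhoG) hs.
case: k1 => [horb|hinj]; last first.
  have hl x : lam x = x by apply: hinj; rewrite orbG.
  have hr x : rho x = x by apply: hinj; rewrite orbG.
  have k2 := key (g := fun x => x == x0) hc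
    (fun x y e => ltac:(by rewrite !hl)) (fun x y e => ltac:(by rewrite !hr)) hs.
  case: k2 => [hc2|hi2].
    have inj : injective (fun _ : X => tt).
      move=> a b _; have := hc2 a x0; have := hc2 b x0; rewrite eqxx.
      by move=> /eqP -> /eqP ->.
    by have := @leq_card _ _ _ inj; rewrite card_unit => /(leq_trans hX).
  by have := @leq_card _ _ _ hi2; rewrite card_bool => /(leq_trans hX).
have mem y : y \in orbit 'P G x0 by rewrite (horb x0 y) orbit_refl.
have reg h : h \in G -> h x0 = x0 -> h = 1%g.
  move=> hG hx; apply/permP => y; rewrite perm1.
  case/orbitP: (mem y) => k kG <-; rewrite /= apermE.
  by rewrite -permM (ab _ _ kG hG) permM hx.
have stab : 'C_G[x0 | 'P]%g = 1%g.
  apply/trivgP/subsetP => h /setIP [hG /astab1P]; rewrite /= apermE => hx.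
  by rewrite inE (reg h hG hx).
have cardG : #|G| = #|X|.
  have oT : orbit 'P G x0 = [set: X] by apply/setP => y; rewrite mem inE.
  by rewrite -cardsT -oT card_orbit stab indexg1.
have G1 : 1 < #|G| by rewrite cardG; apply: leq_trans hX.
have pq := pdiv_prime G1.
case: (Cauchy pq (pdiv_dvd _)) => z zG oz.
set q := pdiv #|G| in pq oz.
have sHG : <[z]>%G \subset G by rewrite cycle_subG.
have k3 := key hc (orbH_inv ab sHG lamG) (orbH_inv ab sHG rhoG) hs.
case: k3 => [horb3|hinj3]; last first.
  have : z x0 = x0.
    apply: hinj3; apply/eqP; rewrite orbit_eq_mem; apply/orbitP.
    by exists z; rewrite /= ?apermE ?cycle_id.
  move/(reg z zG) => z1; move: oz; rewrite z1 order1 => q1.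
  by move: (prime_gt1 pq); rewrite -q1.
have oT : orbit 'P <[z]>%G x0 = [set: X].
  by apply/setP => y; rewrite inE (horb3 x0 y) orbit_refl.
have d : #|X| %| q.
  by rewrite -oz -cardsT -oT card_orbit orderE dvdn_indexg.
have n1 : #|X| != 1 by case: #|X| hX => // [[|]].
move/(prime_nt_dvdP pq n1): d => eX.
exists q; split => //.
  by apply: prime_cyclic; rewrite cardG eX.
by rewrite cardG.
Qed.

Theorem corollary4p2 (X : finType) (lam rho : {perm X})
  (hX : 2 < #|X|) (hcomm : commute lam rho) :
  simple_solution (lyu lam rho) <->
  exists p : nat, [/\ prime p, #|X| = p,
    cyclic <<[set lam; rho]>>%g & #|<<[set lam; rho]>>%g| = p].
Proof.
split; first exact: fwd.
by case=> p [pp hXp _ hG]; apply: (conv hcomm pp hXp hG).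
Qed.
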